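(* Let $K:E(K_{s,t})\to L_n$ be an edge-labeling of the complete bipartite graph $K_{s,t}$ with permutations from $L_n$. Then $(K_{s,t},K)$ has no consistent vertex-labeling if and only if $K_{s,t}$ contains a $4$-cycle $C$ such that $(C,K|_{E(C)})$ has no consistent vertex-labeling.
   Context: Labeled graphs: $G$ is a finite simple graph in which each edge is given a fixed orientation; $uv$ denotes the edge oriented from $u$ to $v$. An edge-labeling $K:E(G)\to S_n$ assigns to each edge a permutation of $[n]=\{0,\dots,n-1\}$. A vertex-labeling is a map $k:V(G)\to[n]$. An edge $uv$ with $K(uv)=\pi$ is a contradiction of $k$ if $\pi(k(u))\neq k(v)$. A vertex-labeling is consistent if it has no contradictions. $L_n=\{\pi_0,\dots,\pi_{n-1}\}\subseteq S_n$, where $\pi_i(x)\equiv i-x \pmod n$. Each $\pi_i$ is an involution, so orientation is irrelevant. *)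

(* Defs.v *)
From mathcomp Require Import all_boot.
Set Implicit Arguments. Unset Strict Implicit. Unset Printing Implicit Defensive.

(* pi_i(x) = i - x (mod n), as a natural number in [0, n) (for n > 0). *)
Definition piL (n : nat) (i x : 'I_n) : nat := (i + (n - x)) %% n.

(* A labeled graph with vertex type V, oriented edge list E (pairs (u,v) for
   the edge uv), and edge-labeling K assigning to each edge the index i of
   pi_i in L_n. *)
Definition consistent (V : finType) (n : nat) (E : seq (V * V))
  (K : V * V -> 'I_n) (k : V -> 'I_n) : bool :=
  all (fun e => piL (K e) (k e.1) == k e.2) E.

Definition Kst_vert (s t : nat) : finType := ('I_s + 'I_t)%type.

Definition Kst_edges (s t : nat) : seq (Kst_vert s t * Kst_vert s t) :=
  [seq ((inl i : Kst_vert s t), (inr j : Kst_vert s t)) | i <- enum 'I_s, j <- enum 'I_t].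

Definition C4_edges (s t : nat) (u1 u2 : 'I_s) (v1 v2 : 'I_t)
  : seq (Kst_vert s t * Kst_vert s t) :=
  [:: (inl u1, inr v1); (inl u1, inr v2); (inl u2, inr v1); (inl u2, inr v2)].

(* Main.v *)
From Stdlib Require Import Classical.
Require Import Defs.
From mathcomp Require Import all_boot zify.

Lemma piL_eq n (i x y : 'I_n) : (piL i x == y) = (x + y == i %[mod n]).
Proof.
have xn := ltn_ord x; have yn := ltn_ord y; have iN := ltn_ord i.
rewrite /piL; apply/eqP/eqP => [<-|H].
  by rewrite modnDmr addnCA subnKC ?(ltnW xn) // -modnDmr modnn addn0.
rewrite -(modn_small yn).
have : y + n = x + y + (n - x) by lia.
move=> E; apply/esym; rewrite -modnDr E -modnDml H modnDml //.
Qed.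

Lemma cyc_cond n s t (K : Kst_vert s t * Kst_vert s t -> 'I_n) u1 u2 v1 v2 k :
  consistent (C4_edges u1 u2 v1 v2) K k ->
  K (inl u1, inr v1) + K (inl u2, inr v2) = K (inl u1, inr v2) + K (inl u2, inr v1) %[mod n].
Proof.
rewrite /consistent /= !piL_eq /= => /and5P [/eqP h1 /eqP h2 /eqP h3 /eqP h4 _].
rewrite -modnDm -h1 -h4 modnDm -(modnDm (K (inl u1, inr v2))) -h2 -h3 modnDm.
congr (_ %% n); rewrite /=; lia.
Qed.

Theorem mainTheorem19 (n s t : nat) (hn : 0 < n)
  (K : Kst_vert s t * Kst_vert s t -> 'I_n) :
  (~ exists k : Kst_vert s t -> 'I_n, consistent (Kst_edges s t) K k) <->
  (exists (u1 u2 : 'I_s) (v1 v2 : 'I_t),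
     u1 != u2 /\ v1 != v2 /\
     ~ exists k : Kst_vert s t -> 'I_n, consistent (C4_edges u1 u2 v1 v2) K k).
Proof.
split; last first.
  move=> [u1 [u2 [v1 [v2 [_ [_ H]]]]]] [k Hk]; apply: H; exists k.
  apply/allP => e He; move/allP: Hk; apply.
  by move: He; rewrite !inE => /or4P [] /eqP ->; apply/allpairsP;
    [exists (u1, v1)|exists (u1, v2)|exists (u2, v1)|exists (u2, v2)];
    rewrite /= !mem_enum.
move=> Hn; apply: NNPP => Hc; apply: Hn.
have cyc : forall u1 u2 v1 v2,
  K (inl u1, inr v1) + K (inl u2, inr v2) = K (inl u1, inr v2) + K (inl u2, inr v1) %[mod n].
  move=> u1 u2 v1 v2.
  case: (eqVneq u1 u2) => [<-|nu]; first by rewrite addnC.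
  case: (eqVneq v1 v2) => [<-|nv]; first by [].
  apply: NNPP => Hne; apply: Hc; exists u1, u2, v1, v2; split => //; split => //.
  by move=> [k Hk]; apply: Hne; exact: cyc_cond Hk.
case: s K cyc Hc => [|s] K cyc Hc.
  by exists (fun _ => Ordinal hn); apply/allP => e /allpairsP [[[] ]].
case: t K cyc Hc => [|t] K cyc Hc.
  by exists (fun _ => Ordinal hn); apply/allP => e /allpairsP [[u []]].
pose c u v := K (inl u, inr v).
pose k (x : Kst_vert s.+1 t.+1) : 'I_n :=
  match x with
  | inl u => Ordinal (ltn_pmod (c u ord0 + (n - c ord0 ord0)) hn)
  | inr v => c ord0 v
  end.
exists k; apply/allP => e /allpairsP [[u v] [_ _ ->]] /=.
rewrite piL_eq /=.
have h0 := ltn_ord (c ord0 ord0).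
have H := cyc u ord0 v ord0; rewrite -/c in H.
rewrite modnDml -(eqn_modDr (c ord0 ord0)); apply/eqP.
have -> : c u ord0 + (n - c ord0 ord0) + c ord0 v + c ord0 ord0
          = (c u ord0 + c ord0 v) + n by rewrite /=; lia.
by rewrite modnDr /c -H.
Qed.
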